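(* Consider the stationary mean field model with scalar interaction described in the context, with finite state space $X$. Suppose that (a) for every $m\in[a,b]$ the optimal policy correspondence $G(\cdot,m)$ is single-valued, with unique selection $g(\cdot,m)$; and (b) for every $m\in[a,b]$ the Markov chain $L_{m,g}$ on $X$ is irreducible and aperiodic, so that it has a unique invariant distribution $s^{m,g}$. Define $f:[a,b]\to\mathbb{R}$ by $f(m)=m-M(s^{m,g})$. Run the following bisection procedure (Adaptive Value Function Iteration): set $a_1=a$, $b_1=b$; at iteration $t$, set $m_t=(a_t+b_t)/2$, compute the value function $V(\cdot,m_t)$ (e.g. by value iteration), the optimal policy $g_t=g(\cdot,m_t)$, and the unique invariant distribution $s^{m_t,g_t}$ of $L_{m_t,g_t}$; evaluate $f(m_t)=m_t-M(s^{m_t,g_t})$; if $f(m_t)=0$ stop; if $f(m_t)>0$ set $b_{t+1}=m_t,\ a_{t+1}=a_t$; if $f(m_t)<0$ set $a_{t+1}=m_t,\ b_{t+1}=b_t$. Then the sequence $\{m_t\}$ converges to some $m^*\in[a,b]$ with $f(m^* )=0$ (if the procedure stops at a finite $t$, take $m^*=m_t$), and the pair consisting of the policy $g^*=g(\cdot,m^* )$ and the population state $s^{m^*,g^*}$ constitutes a mean field equilibrium.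
   Context: Model. $X$ is a finite set of individual states; $\mathcal{P}(X)$ is the set of probability measures on $X$ (population states). $A\subseteq\mathbb{R}^q$ is the action set and $\Gamma:X\to 2^A$ is a nonempty compact-valued continuous (upper and lower hemicontinuous) feasibility correspondence. The scalar interaction function $M:\mathcal{P}(X)\to[a,b]$ is continuous, with known bounds $a<b$. Idiosyncratic shocks $\zeta$ are i.i.d. with law $q$ on a compact separable metric space $E$. The transition function $w:X\times A\times[a,b]\times E\to X$ is continuous: an agent in state $x$ taking action $a'$ when the scalar interaction is $m$ moves to $w(x,a',m,\zeta)$. The one-period payoff $\pi:X\times A\times[a,b]\to\mathbb{R}$ is bounded and continuous, and $\beta\in(0,1)$ is the discount factor. For fixed $m\in[a,b]$, $V(x,m)$ is the supremum over (history-dependent, feasible) policies of the expected discounted payoff $\mathbb{E}\sum_{t\ge1}\beta^{t-1}\pi(x(t),a(t),m)$ from initial state $x$; it satisfies the Bellman equation $V(x,m)=\max_{a'\in\Gamma(x)}\{\pi(x,a',m)+\beta\int_E V(w(x,a',m,\zeta),m)\,q(d\zeta)\}$. The optimal policy correspondence is $G(x,m)=\arg\max_{a'\in\Gamma(x)}\{\pi(x,a',m)+\beta\int_E V(w(x,a',m,\zeta),m)\,q(d\zeta)\}$. For a stationary policy $g(x,m)$ and $m\in[a,b]$, $L_{m,g}(x,y)=q(\{\zeta: w(x,g(x,m),m,\zeta)=y\})$. Mean field equilibrium (MFE): a stationary policy $g$ and $s\in\mathcal{P}(X)$ such that (1) $g(x,M(s))\in G(x,M(s))$ for all $x$, and (2)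 $s(y)=\sum_{x\in X}L_{M(s),g}(x,y)s(x)$ for all $y\in X$. *)

(* Defs.v *)
From HB Require Import structures.
From mathcomp Require Import all_boot all_order all_algebra.
From mathcomp Require Import all_classical all_reals all_analysis.
Set Implicit Arguments. Unset Strict Implicit. Unset Printing Implicit Defensive.
Import Order.TTheory GRing.Theory Num.Theory.
Import numFieldNormedType.Exports.
Local Open Scope classical_set_scope.
Local Open Scope ring_scope.

Notation borel_type E := (g_sigma_algebraType (@open E)).

Definition simplex (R : realType) (X : finType) (s : X -> R) : Prop :=
  (forall x, 0 <= s x) /\ \sum_(x : X) s x = 1.

Fixpoint npow (R : realType) (X : finType) (P : X -> X -> R) (n : nat)
  (x y : X) : R :=
  match n with
  | 0 => (x == y)%:R
  | n'.+1 => \sum_(z : X) npow P n' x z * P z y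
  end.

Definition irreducible (R : realType) (X : finType) (P : X -> X -> R) : Prop :=
  forall x y : X, exists n : nat, (0 < n)%N /\ 0 < npow P n x y.

Definition aperiodic (R : realType) (X : finType) (P : X -> X -> R) : Prop :=
  forall (x : X) (d : nat),
    (forall n : nat, (0 < n)%N -> 0 < npow P n x x -> (d %| n)%N) -> d = 1%N.

Definition invariant_dist (R : realType) (X : finType) (P : X -> X -> R)
  (s : X -> R) : Prop :=
  simplex s /\ forall y : X, s y = \sum_(x : X) P x y * s x.

Definition transL (R : realType) (X : finType) (q : nat)
  (E : ptopologicalType) (qE : probability (borel_type E) R)
  (w : X -> 'rV[R]_q -> R -> E -> X) (g : X -> R -> 'rV[R]_q)
  (m : R) (x y : X) : R :=
  fine (qE [set z : borel_type E | w x (g x m) m z = y]).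

Definition bellman_obj (R : realType) (X : finType) (q : nat)
  (E : ptopologicalType) (qE : probability (borel_type E) R)
  (w : X -> 'rV[R]_q -> R -> E -> X) (pi : X -> 'rV[R]_q -> R -> R)
  (beta : R) (V : X -> R -> R) (x : X) (a' : 'rV[R]_q) (m : R) : R :=
  pi x a' m + beta * (\int[qE]_z V (w x a' m z) m).

Definition optG (R : realType) (X : finType) (q : nat)
  (E : ptopologicalType) (qE : probability (borel_type E) R)
  (Gam : X -> set 'rV[R]_q)
  (w : X -> 'rV[R]_q -> R -> E -> X) (pi : X -> 'rV[R]_q -> R -> R)
  (beta : R) (V : X -> R -> R) (x : X) (m : R) : set 'rV[R]_q :=
  [set a' | Gam x a' /\ forall b', Gam x b' ->
       bellman_obj qE w pi beta V x b' m <= bellman_obj qE w pi beta V x a' m].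

Definition bellman_eq (R : realType) (X : finType) (q : nat)
  (E : ptopologicalType) (qE : probability (borel_type E) R)
  (Gam : X -> set 'rV[R]_q)
  (w : X -> 'rV[R]_q -> R -> E -> X) (pi : X -> 'rV[R]_q -> R -> R)
  (beta : R) (V : X -> R -> R) (m : R) : Prop :=
  forall x : X,
    (exists2 a', Gam x a' & V x m = bellman_obj qE w pi beta V x a' m) /\
    (forall a', Gam x a' -> bellman_obj qE w pi beta V x a' m <= V x m).

Definition is_MFE (R : realType) (X : finType) (q : nat)
  (E : ptopologicalType) (qE : probability (borel_type E) R)
  (Gam : X -> set 'rV[R]_q)
  (w : X -> 'rV[R]_q -> R -> E -> X) (pi : X -> 'rV[R]_q -> R -> R)
  (beta : R) (V : X -> R -> R) (M : (X -> R) -> R)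
  (g : X -> R -> 'rV[R]_q) (s : X -> R) : Prop :=
  simplex s /\
  (forall x : X, optG qE Gam w pi beta V x (M s) (g x (M s))) /\
  (forall y : X, s y = \sum_(x : X) transL qE w g (M s) x y * s x).

(* Bisection (Adaptive Value Function Iteration): the t-th interval
   (a_{t+1}, b_{t+1}), t = 0,1,...  Once f(m_t) = 0 the procedure stops,
   which is encoded by keeping the interval (hence m_t) constant. *)
Fixpoint bisect (R : realType) (f : R -> R) (a b : R) (t : nat) : R * R :=
  match t with
  | 0 => (a, b)
  | t'.+1 =>
      let p := bisect f a b t' in
      let m := (p.1 + p.2) / 2 in
      if f m == 0 then p
      else if 0 < f m then (p.1, m) else (m, p.2)
  end.

(* m_{t+1} = (a_{t+1} + b_{t+1}) / 2 *)
Definition bisect_mid (R : realType) (f : R -> R) (a b : R) (t : nat) : R :=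
  ((bisect f a b t).1 + (bisect f a b t).2) / 2.

(* Main.v *)
Require Import Defs.
From HB Require Import structures.
From mathcomp Require Import all_boot all_order all_algebra.
From mathcomp Require Import all_classical all_reals all_analysis.
From mathcomp Require Import ring lra.
Import Order.TTheory GRing.Theory Num.Theory.
Import numFieldNormedType.Exports.
Local Open Scope classical_set_scope.
Local Open Scope ring_scope.

Set Implicit Arguments. Unset Strict Implicit.

Section W.
Context (R : realType) (X : finType) (q : nat) (A : set 'rV[R]_q) (a b : R)
  (E : pseudoPMetricType R) (w : X -> 'rV[R]_q -> R -> E -> X).
Hypothesis wloc : forall x a0 m0 z0, A a0 -> a <= m0 <= b ->
     \forall p \near (a0, m0, z0),
        A p.1.1 -> a <= p.1.2 <= b -> w x p.1.1 p.1.2 p.2 = w x a0 m0 z0.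
Hypothesis cptE : compact [set: E].

Lemma w_unif x a0 m0 : A a0 -> a <= m0 <= b ->
  \forall p \near (a0, m0), A p.1 -> a <= p.2 <= b ->
     forall z, w x p.1 p.2 z = w x a0 m0 z.
Proof.
move=> Aa0 Im0.
have := (proj1 (compact_near_coveringP _) cptE) _ (nbhs (a0, m0))
  (fun p z => A p.1 -> a <= p.2 <= b -> w x p.1 p.2 z = w x a0 m0 z) _.
move=> /(_ _) H.
have {}H : \forall p \near (a0, m0), [set: E] `<=`
  (fun z => A p.1 -> a <= p.2 <= b -> w x p.1 p.2 z = w x a0 m0 z).
  apply: H => z0 _.
  case: (wloc x z0 Aa0 Im0) => -[U V] [/= NU NV] UV.
  exists (V, U) => //= -[z' p] /= [Vz Up] Ap Ip.
  have e1 := UV (p, z') (conj Up Vz) Ap Ip.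
  have e2 := UV ((a0, m0), z') (conj (nbhs_singleton NU) Vz) Aa0 Im0.
  by rewrite /= in e1 e2; rewrite e1 e2.
by apply: filterS H => p H Ap Ip z; exact: H.
Qed.


Lemma w_loc x a0 m0 : A a0 -> a <= m0 <= b -> forall z0,
  \forall z \near z0, w x a0 m0 z = w x a0 m0 z0.
Proof.
move=> Aa0 Im0 z0.
case: (wloc x z0 Aa0 Im0) => -[U V] [/= NU NV] UV.
apply: filterS NV => z Vz.
have := UV ((a0, m0), z) (conj (nbhs_singleton NU) Vz) Aa0 Im0.
by [].
Qed.

Lemma w_unifK x (K : set 'rV[R]_q) m0 : compact K -> K `<=` A -> a <= m0 <= b ->
  \forall m \near m0, a <= m <= b -> forall a', K a' -> forall z,
     w x a' m z = w x a' m0 z.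
Proof.
move=> cK KA Im0.
have H : \forall m \near m0, K `<=` (fun a' => a <= m <= b -> forall z, w x a' m z = w x a' m0 z).
  have NC := proj2 (near_covering_withinP K) (proj1 (compact_near_coveringP _) cK).
  apply: (NC _ (nbhs m0) (fun m a' => a <= m <= b -> forall z, w x a' m z = w x a' m0 z)) => a0 Ka0.
case: (w_unif x (KA a0 Ka0) Im0) => -[U V] [/= NU NV] UV.
exists (U, V) => //= -[a' m] /= [Ua Vm] Ka Im z.
have e1 := UV (a', m) (conj Ua Vm) (KA _ Ka) Im.
have e2 := UV (a', m0) (conj Ua (nbhs_singleton NV)) (KA _ Ka) Im0.
by rewrite /= in e1 e2; rewrite e1 e2.
by apply: filterS H => m H Im a' Ka' z; exact: H.
Qed.

End W.

Section I.
Context (R : realType) (X : finType) (E : pseudoPMetricType R)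
  (qE : probability (borel_type E) R).

Lemma lc_open (wf : E -> X) (Bs : set X) :
  (forall z0, \forall z \near z0, wf z = wf z0) -> open [set z | Bs (wf z)].
Proof.
move=> lc; rewrite openE => z0 /= Bz0; rewrite /interior.
by apply: filterS (lc z0) => z /= ->.
Qed.

Lemma lc_meas (wf : E -> X) (h : X -> R) :
  (forall z0, \forall z \near z0, wf z = wf z0) ->
  measurable_fun [set: borel_type E] (fun z => h (wf z)).
Proof.
move=> lc _ B _; rewrite setTI.
apply: sub_gen_smallest.
exact: (lc_open (fun y => B (h y)) lc).
Qed.

Lemma sum_abs_ge (h : X -> R) y : `|h y| <= \sum_(y' : X) `|h y'|.
Proof. by rewrite (bigD1 y)//= lerDl sumr_ge0. Qed.

Lemma lc_int (wf : E -> X) (h : X -> R) :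
  (forall z0, \forall z \near z0, wf z = wf z0) ->
  qE.-integrable setT (EFin \o (fun z => h (wf z))).
Proof.
move=> lc; apply: measurable_bounded_integrable => //.
- by have := probability_setT qE; rewrite /= => ->; rewrite ltry.
- exact: lc_meas.
exists (\sum_(y' : X) `|h y'|); split; first exact: num_real.
by move=> M hM z _; apply: le_trans (ltW hM); exact: sum_abs_ge.
Qed.

Lemma int_bound (wf : E -> X) (h : X -> R) D :
  (forall z0, \forall z \near z0, wf z = wf z0) ->
  (forall y, `|h y| <= D) -> `|\int[qE]_z h (wf z)| <= D.
Proof.
move=> lc hD.
apply: le_trans (le_normr_Rintegral _ (lc_int h lc)) _ => //.
have H := @le_Rintegral _ _ _ qE setT _ (fun _ => D) measurableT (lc_int (fun y => `|h y|) lc) (lc_int (fun _ => D) lc) (fun z _ => hD (wf z)).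
apply: le_trans H _.
rewrite Rintegral_cst//; have := probability_setT qE; rewrite /= => ->.
by rewrite mulr1.
Qed.

Lemma int_diff (wf : E -> X) (h1 h2 : X -> R) :
  (forall z0, \forall z \near z0, wf z = wf z0) ->
  \int[qE]_z h1 (wf z) - \int[qE]_z h2 (wf z) = \int[qE]_z (h1 (wf z) - h2 (wf z)).
Proof.
by move=> lc; rewrite RintegralB//; [exact: lc_int|exact: lc_int].
Qed.
End I.

Unset Implicit Arguments. Set Strict Implicit.

Section C.
Context (R : realType) (X : finType) (q : nat) (A : set 'rV[R]_q) (a b : R)
  (Gam : X -> set 'rV[R]_q)
  (E : pseudoPMetricType R) (qE : probability (borel_type E) R)
  (w : X -> 'rV[R]_q -> R -> E -> X) (pi : X -> 'rV[R]_q -> R -> R)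
  (beta : R) (V : X -> R -> R).
Hypothesis wloc : forall x a0 m0 z0, A a0 -> a <= m0 <= b ->
     \forall p \near (a0, m0, z0),
        A p.1.1 -> a <= p.1.2 <= b -> w x p.1.1 p.1.2 p.2 = w x a0 m0 z0.
Hypothesis cptE : compact [set: E].
Hypothesis GamA : forall x, Gam x `<=` A.
Hypothesis cptG : forall x, compact (Gam x).
Hypothesis pic : forall x, {within [set p : 'rV[R]_q * R | A p.1 /\ a <= p.2 <= b],
              continuous (fun p => pi x p.1 p.2)}.
Hypothesis beta01 : 0 < beta < 1.
Hypothesis bell : forall m, a <= m <= b -> bellman_eq qE Gam w pi beta V m.

Lemma pi_near x a0 m0 (e : R) : A a0 -> a <= m0 <= b -> 0 < e ->
  \forall p \near (a0, m0), A p.1 -> a <= p.2 <= b ->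
     `|pi x a0 m0 - pi x p.1 p.2| < e.
Proof.
move=> Aa0 Im0 e0.
have C : (fun p : 'rV[R]_q * R => pi x p.1 p.2) @ within [set p : 'rV[R]_q * R | A p.1 /\ a <= p.2 <= b] (nbhs (a0, m0)) --> pi x a0 m0.
  exact: (proj1 (subspace_continuousP _ _) (pic x) (a0, m0) (conj Aa0 Im0)).
move/cvgr_dist_lt: C => /(_ e e0).
move=> H.
have {}H : \forall p \near (a0, m0), [set p : 'rV[R]_q * R | A p.1 /\ a <= p.2 <= b] p -> `|pi x a0 m0 - pi x p.1 p.2| < e := H.
by apply: filterS H => p H Ap Ip; exact: H.
Qed.

Lemma pi_unif x m0 (e : R) : a <= m0 <= b -> 0 < e ->
  \forall m \near m0, a <= m <= b -> forall a', Gam x a' ->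
     `|pi x a' m - pi x a' m0| < e.
Proof.
move=> Im0 e0.
have H : \forall m \near m0, Gam x `<=` (fun a' => a <= m <= b ->
     `|pi x a' m - pi x a' m0| < e).
  have NC := proj2 (near_covering_withinP (Gam x)) (proj1 (compact_near_coveringP _) (cptG x)).
  apply: (NC _ (nbhs m0) (fun m a' => a <= m <= b -> `|pi x a' m - pi x a' m0| < e)) => a0 Ga0.
  have e20 : 0 < e / 2 by rewrite divr_gt0.
  case: (pi_near x a0 m0 (e/2) (GamA x a0 Ga0) Im0 e20) => -[U W] [/= NU NW] UW.
  exists (U, W) => //= -[a' m] /= [Ua Wm] Ga Im.
  have h1 := UW (a', m) (conj Ua Wm) (GamA x a' Ga) Im.
  have h2 := UW (a', m0) (conj Ua (nbhs_singleton NW)) (GamA x a' Ga) Im0.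
  rewrite /= in h1 h2.
  apply: le_lt_trans (ler_distD (pi x a0 m0) _ _) _.
  by rewrite (distrC (pi x a' m)) (splitr e) ltrD.
by apply: filterS H => m H Im a' Ga; exact: H.
Qed.


Lemma obj_diff x a' m m0 (D' e : R) : Gam x a' -> a <= m0 <= b ->
  `|pi x a' m - pi x a' m0| < e -> (forall z, w x a' m z = w x a' m0 z) ->
  (forall y, `|V y m - V y m0| <= D') ->
  `|bellman_obj qE w pi beta V x a' m - bellman_obj qE w pi beta V x a' m0|
    <= e + beta * D'.
Proof.
move=> Ga Im0 hpi hw hV; rewrite /bellman_obj.
have -> : \int[qE]_z V (w x a' m z) m = \int[qE]_z V (w x a' m0 z) m.
  by congr (Rintegral _ _ _); apply: funext => z; rewrite hw.
have lc := w_loc wloc x (GamA x a' Ga) Im0.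
have -> : pi x a' m + beta * \int[qE]_z V (w x a' m0 z) m -
  (pi x a' m0 + beta * \int[qE]_z V (w x a' m0 z) m0) =
  (pi x a' m - pi x a' m0) + beta * (\int[qE]_z V (w x a' m0 z) m -
    \int[qE]_z V (w x a' m0 z) m0) by ring.
rewrite (int_diff qE (fun y => V y m) (fun y => V y m0) lc).
apply: le_trans (ler_normD _ _) _; apply: lerD; first exact: ltW.
case/andP: beta01 => b0 b1.
rewrite normrM (ger0_norm (ltW b0)) ler_wpM2l ?(ltW b0)//.
by have := int_bound qE (h := fun y => V y m - V y m0) lc hV.
Qed.


Lemma V_cont m0 (e : R) : a <= m0 <= b -> 0 < e ->
  \forall m \near m0, a <= m <= b -> forall y, `|V y m - V y m0| <= e.
Proof.
move=> Im0 e0; case/andP: beta01 => b0 b1.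
set e' := e * (1 - beta).
have e'0 : 0 < e' by rewrite mulr_gt0 // subr_gt0.
have H0 : forall x, \forall m \near m0, a <= m <= b ->
   (forall a', Gam x a' -> `|pi x a' m - pi x a' m0| < e') /\
   (forall a', Gam x a' -> forall z, w x a' m z = w x a' m0 z).
  move=> x.
  have := pi_unif x m0 e' Im0 e'0.
  have := w_unifK wloc cptE x (cptG x) (GamA x) Im0.
  by apply: filterS2 => m h1 h2 Im; split; [exact: h2 | exact: h1].
have H := @filter_forall _ X _ (nbhs m0) (nbhs_filter m0) H0.
apply: filterS H => m H Im.
set D := \big[Num.max/0]_(y : X) `|V y m - V y m0|.
have hD : forall y, `|V y m - V y m0| <= D.
  by move=> y; rewrite /D; apply: le_bigmax.
have D0 : 0 <= D by exact: bigmax_ge_id.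
have key : forall x, `|V x m - V x m0| <= e' + beta * D.
  move=> x; have [hp hw] := H x Im.
  have [[a1 Ga1 V1] le1] := bell m Im x.
  have [[a2 Ga2 V2] le2] := bell m0 Im0 x.
  have := obj_diff x a1 m m0 D e' Ga1 Im0 (hp _ Ga1) (hw _ Ga1) hD.
  rewrite ler_norml => /andP[_ d1].
  have := obj_diff x a2 m m0 D e' Ga2 Im0 (hp _ Ga2) (hw _ Ga2) hD.
  rewrite ler_norml => /andP[d2 _].
  rewrite ler_norml; apply/andP; split.
    apply: (le_trans d2); rewrite V2; apply: lerD => //; exact: le1.
  apply: le_trans d1; rewrite V1; apply: lerD => //; rewrite lerN2; exact: le2.
have DD : D <= e' + beta * D.
  apply: bigmax_le => [|y _]; last exact: key.
  by apply: addr_ge0; [exact: ltW | apply: mulr_ge0 => //; exact: ltW].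
have De : D <= e.
  have : D * (1 - beta) <= e'.
    by rewrite mulrBr mulr1 lerBlDr (mulrC D beta).
  by rewrite /e' ler_pM2r // subr_gt0.
by move=> y; exact: le_trans (hD y) De.
Qed.


Lemma obj_diff2 x a' m a0 m0 (D' e : R) : A a0 -> a <= m0 <= b ->
  `|pi x a' m - pi x a0 m0| < e -> (forall z, w x a' m z = w x a0 m0 z) ->
  (forall y, `|V y m - V y m0| <= D') ->
  `|bellman_obj qE w pi beta V x a' m - bellman_obj qE w pi beta V x a0 m0|
    <= e + beta * D'.
Proof.
move=> Aa0 Im0 hpi hw hV; rewrite /bellman_obj.
have -> : \int[qE]_z V (w x a' m z) m = \int[qE]_z V (w x a0 m0 z) m.
  by congr (Rintegral _ _ _); apply: funext => z; rewrite hw.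
have lc := w_loc wloc x Aa0 Im0.
have -> : pi x a' m + beta * \int[qE]_z V (w x a0 m0 z) m -
  (pi x a0 m0 + beta * \int[qE]_z V (w x a0 m0 z) m0) =
  (pi x a' m - pi x a0 m0) + beta * (\int[qE]_z V (w x a0 m0 z) m -
    \int[qE]_z V (w x a0 m0 z) m0) by ring.
rewrite (int_diff qE (fun y => V y m) (fun y => V y m0) lc).
apply: le_trans (ler_normD _ _) _; apply: lerD; first exact: ltW.
case/andP: beta01 => b0 b1.
rewrite normrM (ger0_norm (ltW b0)) ler_wpM2l ?(ltW b0)//.
by have := int_bound qE (h := fun y => V y m - V y m0) lc hV.
Qed.

Lemma near_snd (T : topologicalType) (t0 : T) (m0 : R) (S : set R) :
  nbhs m0 S -> \forall p \near (t0, m0), S p.2.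
Proof.
move=> NS; exists ([set: T], S) => //=; last by move=> -[t m] [].
by split => //; exact: filterT.
Qed.

Lemma obj_near x a0 m0 (e : R) : A a0 -> a <= m0 <= b -> 0 < e ->
  \forall p \near (a0, m0), A p.1 -> a <= p.2 <= b ->
   `|bellman_obj qE w pi beta V x p.1 p.2 - bellman_obj qE w pi beta V x a0 m0| < e.
Proof.
move=> Aa0 Im0 e0; case/andP: beta01 => b0 b1.
have e20 : 0 < e / 2 by rewrite divr_gt0.
have H1 := pi_near x a0 m0 (e / 2) Aa0 Im0 e20.
have H2 := w_unif wloc cptE x Aa0 Im0.
have H3 := near_snd _ a0 _ _ (V_cont m0 (e / 2) Im0 e20).
have H12 := filterS2 (nbhs_filter (a0, m0)) (fun p h1 h2 => conj h1 h2) H1 H2.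
apply: (filterS2 (nbhs_filter (a0, m0)) _ H12 H3) => p [h1 h2] h3 Ap Ip.
move: (h1 Ap Ip) (h2 Ap Ip) (h3 Ip) => {}h1 {}h2 {}h3.
have := obj_diff2 x p.1 p.2 a0 m0 (e / 2) (e / 2) Aa0 Im0 _ h2 h3.
rewrite distrC in h1; move=> /(_ h1) h.
apply: le_lt_trans h _.
by rewrite [X in _ < X](splitr e) ltrD2l gtr_pMl.
Qed.

Lemma g_cont (g : X -> R -> 'rV[R]_q)
  (hg : forall m, a <= m <= b -> forall x,
     optG qE Gam w pi beta V x m = [set g x m])
  x m0 (U : set 'rV[R]_q) : a <= m0 <= b -> nbhs (g x m0) U ->
  \forall m \near m0, a <= m <= b -> U (g x m).
Proof.
move=> Im0; rewrite nbhsE => -[U' [oU' U'g] U'U].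
set obj := bellman_obj qE w pi beta V x.
have opt : forall m, a <= m <= b -> Gam x (g x m) /\
    (forall b', Gam x b' -> obj b' m <= obj (g x m) m).
  move=> m Im; have : optG qE Gam w pi beta V x m (g x m) by rewrite hg.
  by [].
set astar := g x m0.
have [Gs maxs] := opt m0 Im0.
set K := Gam x `&` ~` U'.
have cK : compact K.
  apply: (subclosed_compact _ (cptG x)); last exact: subIsetl.
  apply: closedI; last exact: open_closedC.
  exact: compact_closed (@norm_hausdorff _ 'rV[R]_q) (cptG x).
have H : \forall m \near m0, K `<=` (fun a' => a <= m <= b -> obj a' m < obj astar m).
  have NC := proj2 (near_covering_withinP K) (proj1 (compact_near_coveringP _) cK).
  apply: (NC _ (nbhs m0) (fun m a' => a <= m <= b -> obj a' m < obj astar m)) => a0 [Ga0 nU'a0].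
  have lt : obj a0 m0 < obj astar m0.
    rewrite lt_neqAle maxs // andbT; apply/eqP => eq0; apply: nU'a0.
    have : optG qE Gam w pi beta V x m0 a0.
      split => // b' Gb'; rewrite /obj in eq0; rewrite eq0; exact: maxs.
    by rewrite hg // => ->.
  set d := obj astar m0 - obj a0 m0.
  have d2 : 0 < d / 2 by rewrite divr_gt0 // subr_gt0.
  case: (obj_near x a0 m0 (d / 2) (GamA x a0 Ga0) Im0 d2) => -[U1 V1] [/= NU1 NV1] S1.
  case: (obj_near x astar m0 (d / 2) (GamA x _ Gs) Im0 d2) => -[U2 V2] [/= NU2 NV2] S2.
  exists (U1, V1 `&` V2) => /=; first by split => //; exact: filterI.
  move=> [a' m] /= [Ua [Vm1 Vm2]] Ka Im.
  have h1 := S1 (a', m) (conj Ua Vm1) (GamA x a' Ka.1) Im.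
  have h2 := S2 (astar, m) (conj (nbhs_singleton NU2) Vm2) (GamA x _ Gs) Im.
  rewrite /= in h1 h2.
  move: h1 h2; rewrite !ltr_norml => /andP[_ h1] /andP[h2 _].
  rewrite /d /obj in h1 h2 *; lra.
apply: filterS H => m H Im.
have [Gm maxm] := opt m Im.
apply: U'U; have [//|nU] := pselect (U' (g x m)).
have := H (g x m) (conj Gm nU) Im.
by rewrite ltNge maxm.
Qed.

Lemma trans_loc (g : X -> R -> 'rV[R]_q)
  (hg : forall m, a <= m <= b -> forall x,
     optG qE Gam w pi beta V x m = [set g x m]) m0 :
  a <= m0 <= b ->
  \forall m \near m0, a <= m <= b -> transL qE w g m = transL qE w g m0.
Proof.
move=> Im0.
have opt : forall m, a <= m <= b -> forall x, Gam x (g x m).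
  move=> m Im x; have : optG qE Gam w pi beta V x m (g x m) by rewrite hg.
  by case.
have H0 : forall x, \forall m \near m0, a <= m <= b ->
    forall z, w x (g x m) m z = w x (g x m0) m0 z.
  move=> x.
  case: (w_unif wloc cptE x (GamA x _ (opt m0 Im0 x)) Im0) => -[U1 V1] [/= NU1 NV1] S1.
  have := g_cont g hg x m0 U1 Im0 NU1.
  move=> Hg; apply: (filterS2 (nbhs_filter m0) _ Hg NV1) => m h Vm Im z.
  exact: (S1 (g x m, m) (conj (h Im) Vm) (GamA x _ (opt m Im x)) Im z).
have H := @filter_forall _ X _ (nbhs m0) (nbhs_filter m0) H0.
apply: filterS H => m H Im.
apply: funext => x; apply: funext => y; rewrite /transL.
congr (fine (qE _)); apply: eq_set => z.
by rewrite (H x Im z).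
Qed.

End C.

Section D.
Context (R : realType) (X : finType) (P : X -> X -> R).
Hypothesis P0 : forall x y, 0 <= P x y.

Lemma npow_ge0 n x y : 0 <= npow P n x y.
Proof.
elim: n x y => [|n IH] x y /=; first exact: ler0n.
by apply: sumr_ge0 => z _; apply: mulr_ge0.
Qed.

Lemma npow_inv (u : X -> R) : (forall y, u y = \sum_(x : X) P x y * u x) ->
  forall n y, u y = \sum_(x : X) npow P n x y * u x.
Proof.
move=> hu; elim=> [|n IH] y /=.
  rewrite (bigD1 y) //= eqxx mul1r big1 ?addr0 // => x /negbTE ->.
  by rewrite mul0r.
rewrite {1}hu.
under [RHS]eq_bigr => x _ do rewrite mulr_suml.
rewrite exchange_big /=; apply: eq_bigr => z _.
rewrite (IH z) mulr_sumr; apply: eq_bigr => x _; ring.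
Qed.

Lemma term_le (f : X -> R) x0 : (forall x, 0 <= f x) -> f x0 <= \sum_(x : X) f x.
Proof. by move=> f0; rewrite (bigD1 x0) //= lerDl sumr_ge0. Qed.

Lemma inv_zero (u : X -> R) : irreducible P ->
  (forall y, u y = \sum_(x : X) P x y * u x) -> (forall x, 0 <= u x) ->
  forall y0, u y0 = 0 -> forall x, u x = 0.
Proof.
move=> irr hu u0 y0 uy0 x.
have [n [_ pn]] := irr x y0.
have := npow_inv u hu n y0; rewrite uy0 => h.
have : npow P n x y0 * u x <= 0.
  rewrite h; apply: (term_le (fun x => npow P n x y0 * u x)) => z.
  by apply: mulr_ge0 => //; exact: npow_ge0.
rewrite pmulr_rle0 // => ux.
by apply/eqP; rewrite eq_le ux u0.
Qed.

Lemma inv_pos (u : X -> R) : irreducible P ->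
  (forall y, u y = \sum_(x : X) P x y * u x) -> (forall x, 0 <= u x) ->
  forall x0, 0 < u x0 -> forall y, 0 < u y.
Proof.
move=> irr hu u0 x0 ux0 y.
rewrite lt_neqAle u0 andbT; apply/eqP => uy.
have := inv_zero u irr hu u0 y (esym uy) x0.
by move=> h; rewrite h ltxx in ux0.
Qed.

Lemma inv_unique (s1 s2 : X -> R) : irreducible P ->
  invariant_dist P s1 -> invariant_dist P s2 -> s1 = s2.
Proof.
move=> irr [[s10 s11] hs1] [[s20 s21] hs2].
have [x0 px0] : exists x0, 0 < s2 x0.
  apply/not_existsP => hn.
  have : \sum_(x : X) s2 x = 0.
    apply: big1 => x _; apply/eqP; rewrite eq_le s20 andbT leNgt.
    by apply/negP => h; exact: (hn x).
  by rewrite s21 => /eqP; rewrite oner_eq0.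
have pos := inv_pos s2 irr hs2 s20 x0 px0.
case: (@arg_minP _ _ X x0 predT (fun x => s1 x / s2 x) isT) => xm _ Hmin.
set c := s1 xm / s2 xm.
set u := fun x => s1 x - c * s2 x.
have u0 : forall x, 0 <= u x.
  move=> x; rewrite /u subr_ge0 -ler_pdivlMr //; exact: Hmin.
have hu : forall y, u y = \sum_(x : X) P x y * u x.
  move=> y; rewrite /u {1}hs1 {1}hs2 mulr_sumr -sumrB.
  by apply: eq_bigr => x _; ring.
have um : u xm = 0 by rewrite /u /c divfK ?subrr // gt_eqF.
have uz := inv_zero u irr hu u0 xm um.
have hc : c = 1.
  have : \sum_(x : X) s1 x = c * \sum_(x : X) s2 x.
    rewrite mulr_sumr; apply: eq_bigr => x _.
    by have := uz x; rewrite /u => /eqP; rewrite subr_eq0 => /eqP.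
  by rewrite s11 s21 mulr1.
apply: funext => x; have := uz x; rewrite /u hc mul1r => /eqP.
by rewrite subr_eq0 => /eqP.
Qed.

End D.

Section Bis.
Context (R : realType) (f : R -> R) (a b : R).
Hypothesis ab : a < b.
Hypothesis fa : f a <= 0.
Hypothesis fb : 0 <= f b.

Let lo t := (bisect f a b t).1.
Let hi t := (bisect f a b t).2.
Let mid t := bisect_mid f a b t.

Lemma bis_step t : bisect f a b t.+1 =
  if f (mid t) == 0 then bisect f a b t
  else if 0 < f (mid t) then (lo t, mid t) else (mid t, hi t).
Proof. by []. Qed.

Lemma mid_between t : lo t <= hi t -> lo t <= mid t <= hi t.
Proof. by move=> h; rewrite /mid /bisect_mid -/(lo t) -/(hi t); apply/andP; split; lra. Qed.

Lemma bis_inv t : [/\ a <= lo t, lo t <= hi t, hi t <= b, f (lo t) <= 0 & 0 <= f (hi t)].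
Proof.
elim: t => [|t [h1 h2 h3 h4 h5]]; first by rewrite /lo /hi /=; split => //; exact: ltW.
have /andP[m1 m2] := mid_between t h2.
rewrite /lo /hi bis_step -/(lo t) -/(hi t).
case: eqP => [//|fm].
case: ifP => fmp /=; split => //; try lra.
Qed.

Lemma lo_mono t : lo t <= lo t.+1.
Proof.
have [_ h2 _ _ _] := bis_inv t; have /andP[m1 m2] := mid_between t h2.
rewrite {2}/lo bis_step; case: eqP => // _; case: ifP => //.
Qed.

Lemma hi_mono t : hi t.+1 <= hi t.
Proof.
have [_ h2 _ _ _] := bis_inv t; have /andP[m1 m2] := mid_between t h2.
rewrite {1}/hi bis_step; case: eqP => // _; case: ifP => //.
Qed.

Lemma frozen t k : f (mid t) = 0 -> bisect f a b (t + k)%N = bisect f a b t.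
Proof.
move=> h; elim: k => [|k IH]; first by rewrite addn0.
rewrite addnS bis_step.
have -> : mid (t + k)%N = mid t by rewrite /mid /bisect_mid IH.
by rewrite h eqxx.
Qed.

Lemma len t : (forall s, f (mid s) != 0) ->
  hi t - lo t = (b - a) * (2^-1) ^+ t.
Proof.
move=> nz; elim: t => [|t IH]; first by rewrite expr0 mulr1.
rewrite /hi /lo bis_step (negbTE (nz t)) -/(lo t) -/(hi t).
rewrite exprSr mulrA -IH /mid /bisect_mid -/(lo t) -/(hi t).
by case: ifP => _ /=; field.
Qed.

Lemma bisect_main :
  (forall m0, a <= m0 <= b -> exists c : R,
     \forall m \near m0, a <= m <= b -> f m = m - c) ->
  exists mstar : R,
    [/\ a <= mstar <= b,
        bisect_mid f a b @ \oo --> mstar,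
        (forall t, f (bisect_mid f a b t) = 0 -> mstar = bisect_mid f a b t)
      & f mstar = 0].
Proof.
move=> loc.
have midI t : a <= mid t <= b.
  have [h1 h2 h3 _ _] := bis_inv t; have /andP[m1 m2] := mid_between t h2.
  apply/andP; split; lra.
have [[t0 ht0]|nz] := pselect (exists t, f (mid t) = 0).
  have cst : forall k, (t0 <= k)%N -> mid k = mid t0.
    move=> k hk; rewrite -(subnKC hk) /mid /bisect_mid.
    by rewrite (frozen t0 (k - t0) ht0).
  exists (mid t0); split => //.
  - apply: cvg_near_cst; near=> k; apply: cst; near: k.
    exact: nbhs_infty_ge.
  - move=> t ht; rewrite -(cst (maxn t0 t)) ?leq_maxl //.
    have cst' : forall k, (t <= k)%N -> mid k = mid t.
      move=> k hk; rewrite -(subnKC hk) /mid /bisect_mid.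
      by rewrite (frozen t (k - t) ht).
    by rewrite cst' ?leq_maxr.
have nz' : forall s, f (mid s) != 0.
  by move=> s; apply/eqP => h; apply: nz; exists s.
have ndlo : nondecreasing_seq lo by apply/nondecreasing_seqP => n; exact: lo_mono.
have ublo : has_ubound (range lo).
  exists b => _ [n _ <-]; have [_ h2 h3 _ _] := bis_inv n; lra.
set l := sup (range lo).
have Hlo : lo @ \oo --> l by exact: nondecreasing_cvgn.
have ehi : hi = fun t => lo t + (b - a) * (2^-1) ^+ t.
  by apply: funext => t; rewrite -len //; ring.
have Hhi : hi @ \oo --> l.
  have H2 : (fun t => (b - a) * (2^-1) ^+ t) @ \oo --> (b - a) * 0.
    have h : (fun t : nat => (2^-1 : R) ^+ t) @ \oo --> 0.
      by apply: cvg_expr; rewrite ger0_norm ?invf_lt1 ?ltr1n // invr_ge0 ler0n.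
    exact: (cvgMr h).
  have := cvgD Hlo H2; rewrite mulr0 addr0 ehi; exact.
have Hmid : mid @ \oo --> l.
  have -> : mid = fun t => (lo t + hi t) / 2 by [].
  have -> : l = (l + l) / 2 by field.
  have := cvgMl (cvgD Hlo Hhi) (b := 2^-1); exact.
have lI : a <= l <= b.
  apply/andP; split.
    apply: (closed_cvg _ (@closed_ge R a) _ _ Hlo).
    by apply: nearW => n; have [h1 _ _ _ _] := bis_inv n.
  apply: (closed_cvg _ (@closed_le R b) _ _ Hlo).
  by apply: nearW => n /=; have [_ h2 h3 _ _] := bis_inv n; lra.
have [c Hc] := loc l lI.
have lc : l <= c.
  apply: (closed_cvg _ (@closed_le R c) _ _ Hlo).
  have H : \forall n \near \oo, (a <= lo n <= b -> f (lo n) = lo n - c) := Hlo _ Hc.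
  apply: filterS H => n /= h.
  have [h1 h2 h3 h4 _] := bis_inv n.
  have : f (lo n) = lo n - c by apply: h; apply/andP; split; lra.
  lra.
have cl : c <= l.
  apply: (closed_cvg _ (@closed_ge R c) _ _ Hhi).
  have H : \forall n \near \oo, (a <= hi n <= b -> f (hi n) = hi n - c) := Hhi _ Hc.
  apply: filterS H => n /= h.
  have [h1 h2 h3 _ h5] := bis_inv n.
  have : f (hi n) = hi n - c by apply: h; apply/andP; split; lra.
  lra.
exists l; split => //.
  by move=> t ht; exfalso; apply: nz; exists t.
by rewrite (nbhs_singleton Hc lI); lra.
Unshelve. all: by end_near.
Qed.

End Bis.

Theorem theorem1 (R : realType) (X : finType) (q : nat)
  (A : set 'rV[R]_q) (Gam : X -> set 'rV[R]_q)
  (a b : R) (M : (X -> R) -> R)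
  (E : pseudoPMetricType R) (qE : probability (borel_type E) R)
  (w : X -> 'rV[R]_q -> R -> E -> X) (pi : X -> 'rV[R]_q -> R -> R)
  (beta : R) (V : X -> R -> R)
  (g : X -> R -> 'rV[R]_q) (s : R -> X -> R) :
  a < b ->
  (forall x, Gam x `<=` A) ->
  (forall x, Gam x !=set0) ->
  (forall x, compact (Gam x)) ->
  (forall s0, simplex s0 -> a <= M s0 <= b) ->
  (forall s0, simplex s0 -> forall e : R, 0 < e -> exists2 d : R, 0 < d &
     forall s1, simplex s1 -> (forall x, `|s1 x - s0 x| < d) ->
       `|M s1 - M s0| < e) ->
  hausdorff_space E ->
  compact [set: E] ->
  (exists D : set E, countable D /\ closure D = [set: E]) ->
  (forall x a0 m0 z0, A a0 -> a <= m0 <= b ->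
     \forall p \near (a0, m0, z0),
        A p.1.1 -> a <= p.1.2 <= b -> w x p.1.1 p.1.2 p.2 = w x a0 m0 z0) ->
  (exists K : R, forall x a' m, A a' -> a <= m <= b -> `|pi x a' m| <= K) ->
  (forall x, {within [set p : 'rV[R]_q * R | A p.1 /\ a <= p.2 <= b],
              continuous (fun p => pi x p.1 p.2)}) ->
  0 < beta < 1 ->
  (forall m, a <= m <= b -> bellman_eq qE Gam w pi beta V m) ->
  (forall m, a <= m <= b -> forall x,
     optG qE Gam w pi beta V x m = [set g x m]) ->
  (forall m, a <= m <= b ->
     irreducible (transL qE w g m) /\ aperiodic (transL qE w g m)) ->
  (forall m, a <= m <= b -> invariant_dist (transL qE w g m) (s m)) ->
  let f := fun m : R => m - M (s m) in
  exists mstar : R,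
    [/\ a <= mstar <= b,
        bisect_mid f a b @ \oo --> mstar,
        (forall t, f (bisect_mid f a b t) = 0 -> mstar = bisect_mid f a b t),
        f mstar = 0
      & is_MFE qE Gam w pi beta V M g (s mstar)].
Proof.
move=> ab GamA _ cptG Mb _ _ cptE _ wloc _ pic beta01 bell hg irrap hs f.
have P0 : forall m x y, 0 <= transL qE w g m x y.
  by move=> m x y; rewrite /transL fine_ge0 // measure_ge0.
have loc : forall m0, a <= m0 <= b -> exists c : R,
    \forall m \near m0, a <= m <= b -> f m = m - c.
  move=> m0 Im0; exists (M (s m0)).
  have := @trans_loc R X q A a b Gam E qE w pi beta V wloc cptE GamA cptG pic
    beta01 bell g hg m0 Im0.
  apply: filterS => m h Im; rewrite /f.
  congr (_ - M _).
  apply: (inv_unique R X (transL qE w g m0) (P0 m0) _ _ (irrap m0 Im0).1).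
    by rewrite -(h Im); exact: hs.
  exact: hs.
have Ia : a <= a <= b by rewrite lexx ltW.
have Ib : a <= b <= b by rewrite lexx ltW.
have fa : f a <= 0.
  by rewrite /f subr_le0; have /andP[] := Mb (s a) (hs a Ia).1.
have fb : 0 <= f b.
  by rewrite /f subr_ge0; have /andP[] := Mb (s b) (hs b Ib).1.
have [mstar [mI mcvg mfz mf0]] := bisect_main R f a b ab fa fb loc.
exists mstar; split => //.
have hM : M (s mstar) = mstar.
  by apply/esym/eqP; rewrite -subr_eq0; apply/eqP.
split; first exact: (hs _ mI).1.
split.
  by move=> x; rewrite hM hg.
rewrite hM; exact: (hs _ mI).2.
Qed.
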